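(* Let $A^1,A^2$ be finite nonempty sets, let $\tau^1,\tau^2\ge 0$, and for $i\in\{1,2\}$ with $j\neq i$ let $R^i\in\mathbb{R}^{|A^i|\times|A^j|}$ be arbitrary. Let $\underline{r}$ and $\overline{r}$ denote, respectively, the minimum and maximum entries of the matrix $R^1+(R^2)^T$. Then $$\underline{r}\le \mathrm{val}^1(R^1)+\mathrm{val}^2(R^2)\le \overline{r},\qquad \underline{r}\le \underline{\mathrm{val}}^1(R^1)+\underline{\mathrm{val}}^2(R^2)\le \overline{r},$$ and, for each $i\in\{1,2\}$ and $j\ne i$, $$-\tau^j\log|A^j|\le \underline{\mathrm{val}}^i(R^i)-\mathrm{val}^i(R^i)\le \tau^i\log|A^i|.$$
   Context: $\Delta^i$ denotes the probability simplex over $A^i$. The entropy is $H^i(\mu^i)=-\sum_{a^i\in A^i}\mu^i(a^i)\log\mu^i(a^i)\in[0,\log|A^i|]$. For $i\in\{1,2\}$, $j\neq i$: $\mathrm{val}^i(R^i)=\max_{\mu^i\in\Delta^i}\min_{\mu^j\in\Delta^j}(\mu^i)^TR^i\mu^j$ and $\underline{\mathrm{val}}^i(R^i)=\max_{\mu^i\in\Delta^i}\min_{\mu^j\in\Delta^j}\{(\mu^i)^TR^i\mu^j+\tau^iH^i(\mu^i)-\tau^jH^j(\mu^j)\}$. *)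

(* Defs.v *)
From HB Require Import structures.
From mathcomp Require Import all_boot all_order all_algebra.
From mathcomp Require Import all_classical all_reals all_analysis.
Set Implicit Arguments. Unset Strict Implicit. Unset Printing Implicit Defensive.
Import Order.TTheory GRing.Theory Num.Theory.
Local Open Scope ring_scope.
Local Open Scope classical_set_scope.

Section Defs.
Variable R : realType.

Definition simplex (A : finType) (mu : A -> R) : Prop :=
  (forall a, 0 <= mu a) /\ \sum_(a : A) mu a = 1.

(* Shannon entropy (natural log), with 0 log 0 = 0 *)
Definition entropy (A : finType) (mu : A -> R) : R :=
  - \sum_(a : A) mu a * ln (mu a).

Definition bil (A B : finType) (mu : A -> R) (M : A -> B -> R) (nu : B -> R) : R :=
  \sum_(a : A) \sum_(b : B) mu a * M a b * nu b.

(* gval(M) = max_{mu} min_{nu} mu^T M nu   (max/min written as sup/inf; they are attained) *)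
Definition gval (A B : finType) (M : A -> B -> R) : R :=
  sup [set x | exists mu : A -> R, simplex mu /\
     x = inf [set y | exists nu : B -> R, simplex nu /\ y = bil mu M nu]].

Definition rgval (A B : finType) (taui tauj : R) (M : A -> B -> R) : R :=
  sup [set x | exists mu : A -> R, simplex mu /\
     x = inf [set y | exists nu : B -> R, simplex nu /\
              y = bil mu M nu + taui * entropy mu - tauj * entropy nu]].

End Defs.

(* Main.v *)
Require Import Defs.
From HB Require Import structures.
From mathcomp Require Import all_boot all_order all_algebra.
From mathcomp Require Import all_classical all_reals all_analysis.
From mathcomp Require Import ring lra.
Import Order.TTheory GRing.Theory Num.Theory.
Set Implicit Arguments. Unset Strict Implicit. Unset Printing Implicit Defensive.
Local Open Scope ring_scope.
Local Open Scope classical_set_scope.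

Section Aux.
Variable R : realType.
Implicit Types x y u v d : R.

Lemma ln_le_sub1 y : 0 < y -> ln y <= y - 1.
Proof.
move=> y0; have := expR_ge1Dx (ln y); rewrite lnK ?posrE //.
by move=> h; rewrite lerBrDl.
Qed.

Lemma ln_ge_1subV y : 0 < y -> 1 - y^-1 <= ln y.
Proof.
move=> y0; have := @ln_le_sub1 y^-1; rewrite invr_gt0 y0 => /(_ isT).
by rewrite lnV ?posrE // => h; lra.
Qed.

Lemma xlnx_sub u v : 0 <= v -> v <= u ->
  v * ln v + (u - v) * ln (u - v) <= u * ln u.
Proof.
move=> v0 vu.
have Hu : u * ln u = v * ln u + (u - v) * ln u by rewrite -mulrDl addrC subrK.
rewrite Hu lerD //.
  case: (ltrgt0P v) v0 => // [vp _|->]; last by rewrite !mul0r.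
  rewrite ler_pM2l // ler_ln ?posrE //; exact: (lt_le_trans vp vu).
have : 0 <= u - v by rewrite subr_ge0.
case: (ltrgt0P (u - v)) => // [dp _|-> _]; last by rewrite !mul0r.
rewrite ler_pM2l // ler_ln ?posrE //; lra.
Qed.

Lemma xlnx_lip u v : 0 <= u -> u <= v -> v <= 1 ->
  v * ln v - u * ln u <= v - u.
Proof.
move=> u0 uv v1.
case: (ltrgt0P u) (u0) => // [up _|u00 _]; last first.
  rewrite u00 in uv *.
  rewrite mul0r subr0 subr0.
  have : ln v <= 0 by exact: ln_le0.
have v0 : 0 <= v by [].

by move=> h; rewrite (le_trans (mulr_ge0_le0 v0 h)).
have vp : 0 < v by exact: lt_le_trans up uv.
have e : v * ln v - u * ln u = u * (ln v - ln u) + (v - u) * ln v.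
  by rewrite mulrBr mulrBl; ring.
rewrite e.
have h1 : u * (ln v - ln u) <= v - u.
  have : ln (v / u) <= v / u - 1 by apply: ln_le_sub1; exact: divr_gt0.
  rewrite lnM ?posrE ?invr_gt0 // lnV ?posrE // => h.
  rewrite -(ler_pM2l up) in h.
  by apply: (le_trans h); rewrite mulrBr mulr1 mulrCA mulfV ?gt_eqF // mulr1.
have h2 : (v - u) * ln v <= 0.
  by apply: mulr_ge0_le0; [rewrite subr_ge0 | exact: ln_le0].
lra.
Qed.

Lemma xlnx_small d m : 0 < m -> 0 <= d -> d <= (m * m)^-1 ->
  - (d * ln d) <= 2 / m.
Proof.
move=> m0 d0 dm.
case: (ltrgt0P d) d0 => // [dp _|-> _]; last first.
  by rewrite mul0r oppr0 divr_ge0 // ltW.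
have e : - (d * ln d) = d * (ln m + ln ((d * m)^-1)).
  rewrite -lnM ?posrE ?invr_gt0 ?mulr_gt0 //.
  have -> : m * (d * m)^-1 = d^-1 by rewrite invfM mulrCA mulfV ?gt_eqF // mulr1.
  rewrite lnV ?posrE //; ring.
rewrite e.
have h1 := @ln_le_sub1 m m0.
have h2 : ln ((d * m)^-1) <= (d * m)^-1 - 1 by apply: ln_le_sub1; rewrite invr_gt0 mulr_gt0.
have : d * (ln m + ln ((d * m)^-1)) <= d * (m - 1 + ((d * m)^-1 - 1)).
  by rewrite ler_pM2l // lerD.
move=> /le_trans; apply.
have -> : d * (m - 1 + ((d * m)^-1 - 1)) = d * m + m^-1 - 2 * d.
  have mn : m != 0 by rewrite gt_eqF.
  have dn : d != 0 by rewrite gt_eqF.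
  by field; rewrite ?mn ?dn.
have dmm : d * m <= m^-1.
  rewrite -(ler_pM2r m0) in dm; apply: (le_trans dm).
  have mn' : m != 0 by rewrite gt_eqF.
  by rewrite le_eqVlt; apply/orP; left; apply/eqP; field; rewrite ?mn'.
lra.
Qed.

Lemma xlnx_diff u v m : 0 < m -> 0 <= u <= 1 -> 0 <= v <= 1 ->
  u - v <= (m * m)^-1 -> v - u <= (m * m)^-1 ->
  - (u * ln u) - - (v * ln v) <= 2 / m + (m * m)^-1.
Proof.
move=> m0 /andP[u0 u1] /andP[v0 v1] h1 h2.
have dpos : 0 <= (m * m)^-1 by rewrite invr_ge0 mulr_ge0 // ltW.
have mpos : 0 <= 2 / m by rewrite divr_ge0 // ltW.
case: (leP v u) => vu.
  have := @xlnx_sub u v v0 vu.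
  have := @xlnx_small (u - v) m m0; rewrite subr_ge0 vu => /(_ isT h1) hs hsub.
  lra.
have := @xlnx_lip u v u0 (ltW vu) v1; lra.
Qed.

Lemma simplex_le1 (A : finType) (mu : A -> R) a : simplex mu -> mu a <= 1.
Proof.
move=> [h0 h1]; rewrite -h1 (bigD1 a) //= lerDl.
by apply: sumr_ge0 => i _; exact: h0.
Qed.

Lemma sum_const_card (A : finType) (c : R) : \sum_(a : A) c = c *+ #|A|.
Proof. by rewrite sumr_const. Qed.

Lemma entropy_ge0 (A : finType) (mu : A -> R) : simplex mu -> 0 <= entropy mu.
Proof.
move=> hs; rewrite /entropy oppr_ge0; apply: sumr_le0 => a _.
apply: mulr_ge0_le0; first exact: hs.1.
by apply: ln_le0; exact: (simplex_le1 a hs).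
Qed.

Lemma entropy_le (A : finType) (mu : A -> R) : simplex mu ->
  entropy mu <= ln (#|A|%:R).
Proof.
move=> [h0 h1].
have nA : (0 < #|A|)%N.
  case: (pickP (fun _ : A => true)) => [a _|hn]; first by apply/card_gt0P; exists a.
  move: h1; rewrite big1 => [/esym/eqP|a _]; first by rewrite oner_eq0.
  by have := hn a.
set n : R := #|A|%:R.
have n0 : 0 < n by rewrite ltr0n.
have key : forall a, - (mu a * ln (mu a)) - mu a * ln n <= n^-1 - mu a.
  move=> a; case: (ltrgt0P (mu a)) (h0 a) => // [mp _|-> _]; last first.
    have : 0 < n^-1 by rewrite invr_gt0.
    by rewrite !mul0r; lra.
  have := @ln_ge_1subV (n * mu a); rewrite mulr_gt0 // => /(_ isT).
  rewrite lnM ?posrE // => h.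
  have := ler_pM2l mp; move=> /(_ (1 - (n * mu a)^-1) (ln n + ln (mu a))).
  rewrite h => /esym hh.
  have e : mu a * (1 - (n * mu a)^-1) = mu a - n^-1.
    have : mu a != 0 by rewrite gt_eqF.
    have : n != 0 by rewrite gt_eqF.
    by move=> a1 a2; field; rewrite ?a1 ?a2.
  rewrite e in hh; lra.
have : \sum_a (- (mu a * ln (mu a)) - mu a * ln n) <= \sum_a (n^-1 - mu a).
  by apply: ler_sum => a _; exact: key.
rewrite sumrB sumrB h1 sum_const_card -/n -mulr_suml h1 mul1r.
rewrite -[n^-1 *+ #|A|]mulr_natr -/n mulVf ?gt_eqF // subrr.
rewrite /entropy sumrN; lra.
Qed.

Lemma xlnx_jensen (I : finType) (p : I -> R) (X : I -> R) :
  (forall i, 0 <= p i) -> \sum_i p i = 1 -> (forall i, 0 <= X i) ->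
  (\sum_i p i * X i) * ln (\sum_i p i * X i) <= \sum_i p i * (X i * ln (X i)).
Proof.
move=> p0 p1 X0.
set s := \sum_i p i * X i.
have s0 : 0 <= s by apply: sumr_ge0 => i _; rewrite mulr_ge0.
case: (ltrgt0P s) s0 => // [sp _|se _]; last first.
  have hz : forall i, p i * X i = 0.
    move=> i; apply/eqP; rewrite eq_le mulr_ge0 // andbT.
    have := se; rewrite /s (bigD1 i) //= => he.
    have : 0 <= \sum_(j | j != i) p j * X j by apply: sumr_ge0 => j _; rewrite mulr_ge0.
    lra.
  rewrite se mul0r; apply: sumr_ge0 => i _.
  by rewrite mulrA hz mul0r.
have key : forall i, p i * X i * ln s + p i * (X i - s) <= p i * (X i * ln (X i)).
  move=> i; case: (ltrgt0P (X i)) (X0 i) => // [xp _|-> _]; last first.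
    have : 0 <= p i * s by rewrite mulr_ge0 // ltW.
    by rewrite !mul0r mulr0 mulrBr mulr0; lra.
  rewrite -mulrA -mulrDr ler_wpM2l //.
  have := @ln_ge_1subV (X i / s); rewrite divr_gt0 // => /(_ isT).
  rewrite lnM ?posrE ?invr_gt0 // lnV ?posrE // => h.
  have := ler_pM2l xp; move=> /(_ (1 - (X i / s)^-1) (ln (X i) + - ln s)).
  rewrite h => /esym hh.
  have e : X i * (1 - (X i / s)^-1) = X i - s.
    have : X i != 0 by rewrite gt_eqF.
    have : s != 0 by rewrite gt_eqF.
    by move=> a1 a2; field; rewrite ?a1 ?a2.
  rewrite e in hh; lra.
have : \sum_i (p i * X i * ln s + p i * (X i - s)) <= \sum_i p i * (X i * ln (X i)).
  by apply: ler_sum => i _; exact: key.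
rewrite big_split /= -mulr_suml -/s.
have -> : \sum_i p i * (X i - s) = 0.
  by rewrite (eq_bigr (fun i => p i * X i - p i * s)) ?sumrB -?mulr_suml ?p1 ?mul1r ?subrr // => i _; rewrite mulrBr.
by rewrite addr0.
Qed.

Lemma entropy_concave (I A : finType) (p : I -> R) (X : I -> A -> R) :
  simplex p -> (forall i, simplex (X i)) ->
  \sum_i p i * entropy (X i) <= entropy (fun a => \sum_i p i * X i a).
Proof.
move=> [p0 p1] hX.
rewrite /entropy.
have -> : \sum_i p i * - (\sum_a X i a * ln (X i a)) =
          - \sum_a \sum_i p i * (X i a * ln (X i a)).
  rewrite (exchange_big) /= -sumrN; apply: eq_bigr => i _.
  by rewrite mulrN mulr_sumr.
rewrite lerN2; apply: ler_sum => a _.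
apply: xlnx_jensen => // i; exact: (hX i).1.
Qed.

Lemma entropy_diff (A : finType) (y y' : A -> R) m : 0 < m ->
  simplex y -> simplex y' ->
  (forall a, y a - y' a <= (m * m)^-1) -> (forall a, y' a - y a <= (m * m)^-1) ->
  entropy y - entropy y' <= (2 / m + (m * m)^-1) *+ #|A|.
Proof.
move=> m0 hy hy' h1 h2.
rewrite /entropy -sum_const_card opprK addrC -sumrN -big_split /=.
apply: ler_sum => a _.
have := @xlnx_diff (y a) (y' a) m m0.
rewrite (hy.1 a) (hy'.1 a) (simplex_le1 a hy) (simplex_le1 a hy') => /(_ isT isT (h1 a) (h2 a)).
lra.
Qed.

Lemma simplex_unif (A : finType) : (0 < #|A|)%N -> simplex (fun _ : A => (#|A|%:R : R)^-1).
Proof.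
move=> hA; split=> [a|]; first by rewrite invr_ge0 ler0n.
by rewrite sum_const_card -[_ *+ #|A|]mulr_natr mulVf // pnatr_eq0 -lt0n.
Qed.

Lemma simplex_mix (I A : finType) (p : I -> R) (X : I -> A -> R) :
  simplex p -> (forall i, simplex (X i)) -> simplex (fun a => \sum_i p i * X i a).
Proof.
move=> [p0 p1] hX; split=> [a|].
  by apply: sumr_ge0 => i _; rewrite mulr_ge0 // (hX i).1.
rewrite exchange_big /= -p1; apply: eq_bigr => i _.
by rewrite -mulr_sumr (hX i).2 mulr1.
Qed.

Section Game.
Variables (A B : finType) (M : A -> B -> R).

Definition KM := \sum_a \sum_b `|M a b|.

Lemma KM_ge0 : 0 <= KM.
Proof. by apply: sumr_ge0 => a _; apply: sumr_ge0 => b _. Qed.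

Lemma bil_norm mu nu : simplex mu -> simplex nu -> `|bil mu M nu| <= KM.
Proof.
move=> hmu hnu; rewrite /bil /KM.
apply: (le_trans (ler_norm_sum _ _ _)); apply: ler_sum => a _.
apply: (le_trans (ler_norm_sum _ _ _)); apply: ler_sum => b _.
rewrite !normrM (ger0_norm (hmu.1 a)) (ger0_norm (hnu.1 b)).
apply: (@le_trans _ _ (1 * `|M a b| * 1)); last by rewrite mul1r mulr1.
apply: ler_pM; rewrite ?(hnu.1 b) ?simplex_le1 //.
  by rewrite mulr_ge0 // (hmu.1 a).
by apply: ler_pM; rewrite ?(hmu.1 a) ?simplex_le1.
Qed.

Lemma bil_diff_r (x : A -> R) (y y' : B -> R) d : simplex x ->
  (forall b, y b - y' b <= d) -> (forall b, y' b - y b <= d) ->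
  bil x M y - bil x M y' <= KM * d.
Proof.
move=> hx h1 h2; rewrite /bil /KM -sumrB mulr_suml; apply: ler_sum => a _.
rewrite -sumrB mulr_suml; apply: ler_sum => b _.
rewrite -mulrBr.
apply: (le_trans (ler_norm _)); rewrite normrM.
have hd : `|y b - y' b| <= d by rewrite ler_norml h1 andbT; have := h2 b; lra.
have d0 : 0 <= d by apply: le_trans hd.
rewrite ler_pM //; rewrite normrM ger0_norm ?(hx.1 a) //.
rewrite -[X in _ <= X]mul1r ler_wpM2r //.
exact: simplex_le1.
Qed.

Lemma bil_diff_l (x x' : A -> R) (y : B -> R) d : simplex y ->
  (forall a, x a - x' a <= d) -> (forall a, x' a - x a <= d) ->
  bil x M y - bil x' M y <= KM * d.
Proof.
move=> hy h1 h2; rewrite /bil /KM -sumrB mulr_suml; apply: ler_sum => a _.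
rewrite -sumrB mulr_suml; apply: ler_sum => b _.
have -> : x a * M a b * y b - x' a * M a b * y b = (x a - x' a) * (M a b * y b).
  by ring.
apply: (le_trans (ler_norm _)); rewrite normrM.
have hd : `|x a - x' a| <= d by rewrite ler_norml h1 andbT; have := h2 a; lra.
have d0 : 0 <= d by apply: le_trans hd.
rewrite mulrC ler_pM //; rewrite normrM (ger0_norm (hy.1 b)).
rewrite -[X in _ <= X]mulr1 ler_wpM2l //.
exact: simplex_le1.
Qed.

Lemma bil_mix_l (I : finType) (p : I -> R) (X : I -> A -> R) (y : B -> R) :
  bil (fun a => \sum_i p i * X i a) M y = \sum_i p i * bil (X i) M y.
Proof.
rewrite /bil.
transitivity (\sum_a \sum_b \sum_i p i * (X i a * M a b * y b)).
  apply: eq_bigr => a _; apply: eq_bigr => b _; rewrite !mulr_suml.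
  by apply: eq_bigr => i _; rewrite !mulrA.
transitivity (\sum_a \sum_i \sum_b p i * (X i a * M a b * y b)).
  by apply: eq_bigr => a _; rewrite exchange_big.
rewrite exchange_big /=; apply: eq_bigr => i _.
rewrite mulr_sumr; apply: eq_bigr => a _; by rewrite mulr_sumr.
Qed.

Lemma bil_mix_r (J : finType) (q : J -> R) (Y : J -> B -> R) (x : A -> R) :
  bil x M (fun b => \sum_j q j * Y j b) = \sum_j q j * bil x M (Y j).
Proof.
rewrite /bil.
transitivity (\sum_a \sum_b \sum_i q i * (x a * M a b * Y i b)).
  apply: eq_bigr => a _; apply: eq_bigr => b _; rewrite !mulr_sumr.
  by apply: eq_bigr => i _; rewrite mulrCA.
transitivity (\sum_a \sum_i \sum_b q i * (x a * M a b * Y i b)).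
  by apply: eq_bigr => a _; rewrite exchange_big.
rewrite exchange_big /=; apply: eq_bigr => i _.
rewrite mulr_sumr; apply: eq_bigr => a _; by rewrite mulr_sumr.
Qed.
End Game.

Section Val.
Variables (A B : finType) (M : A -> B -> R) (ti tj : R).
Hypotheses (hA : (0 < #|A|)%N) (hB : (0 < #|B|)%N) (ti0 : 0 <= ti) (tj0 : 0 <= tj).

Definition Fv (mu : A -> R) (nu : B -> R) := bil mu M nu + ti * entropy mu - tj * entropy nu.
Definition hv (mu : A -> R) := inf [set y | exists nu, simplex nu /\ y = Fv mu nu].

Definition Flo := - KM M - tj * ln (#|B|%:R).
Definition Fhi := KM M + ti * ln (#|A|%:R).

Lemma Fv_bounds mu nu : simplex mu -> simplex nu -> Flo <= Fv mu nu <= Fhi.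
Proof.
move=> hmu hnu; rewrite /Fv /Flo /Fhi.
have := bil_norm M hmu hnu; rewrite ler_norml => /andP[b1 b2].
have e1 := entropy_ge0 hmu; have e2 := entropy_le hmu.
have e3 := entropy_ge0 hnu; have e4 := entropy_le hnu.
have f1 : ti * entropy mu <= ti * ln (#|A|%:R) by rewrite ler_wpM2l.
have f2 : tj * entropy nu <= tj * ln (#|B|%:R) by rewrite ler_wpM2l.
have f3 : 0 <= ti * entropy mu by rewrite mulr_ge0.
have f4 : 0 <= tj * entropy nu by rewrite mulr_ge0.
apply/andP; split; lra.
Qed.

Lemma hv_set_ne mu : simplex mu -> [set y | exists nu, simplex nu /\ y = Fv mu nu] !=set0.
Proof.
move=> _; exists (Fv mu (fun _ => (#|B|%:R)^-1)); exists (fun _ => (#|B|%:R)^-1).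
by split=> //; apply: simplex_unif.
Qed.

Lemma hv_set_lb mu : simplex mu -> has_lbound [set y | exists nu, simplex nu /\ y = Fv mu nu].
Proof.
move=> hmu; exists Flo => y [nu [hnu ->]].
by have /andP[] := Fv_bounds hmu hnu.
Qed.

Lemma hv_le mu nu : simplex mu -> simplex nu -> hv mu <= Fv mu nu.
Proof.
move=> hmu hnu; apply: (ge_inf (hv_set_lb hmu)); by exists nu.
Qed.

Lemma hv_ge mu c : simplex mu -> (forall nu, simplex nu -> c <= Fv mu nu) -> c <= hv mu.
Proof.
move=> hmu h; apply: lb_le_inf; first exact: hv_set_ne.
by move=> y [nu [hnu ->]]; apply: h.
Qed.

Lemma hv_approx mu e : simplex mu -> 0 < e -> exists nu, simplex nu /\ Fv mu nu < hv mu + e.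
Proof.
move=> hmu e0; have [y [nu [hnu ->]] hy] := inf_adherent e0 (conj (hv_set_ne hmu) (hv_set_lb hmu)).
by exists nu.
Qed.

Lemma hv_bounds mu : simplex mu -> Flo <= hv mu <= Fhi.
Proof.
move=> hmu; apply/andP; split.
  by apply: hv_ge => // nu hnu; have /andP[] := Fv_bounds hmu hnu.
have hu := simplex_unif hB.
apply: le_trans (hv_le hmu hu) _; by have /andP[] := Fv_bounds hmu hu.
Qed.

Definition rset := [set x | exists mu, simplex mu /\ x = hv mu].

Lemma rgvalE : rgval ti tj M = sup rset.
Proof. by []. Qed.

Lemma rset_ub : has_ubound rset.
Proof. by exists Fhi => x [mu [hmu ->]]; have /andP[] := hv_bounds hmu. Qed.

Lemma rset_ne : rset !=set0.
Proof. by exists (hv (fun _ => (#|A|%:R)^-1)); exists (fun _ => (#|A|%:R)^-1); split => //; apply: simplex_unif. Qed.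

Lemma rg_ge mu : simplex mu -> hv mu <= rgval ti tj M.
Proof. by move=> hmu; rewrite rgvalE; apply: (ub_le_sup rset_ub); exists mu. Qed.

Lemma rg_le c : (forall mu, simplex mu -> hv mu <= c) -> rgval ti tj M <= c.
Proof. by move=> h; rewrite rgvalE; apply: ge_sup rset_ne _ => x [mu [hmu ->]]; apply: h. Qed.

Lemma rg_approx e : 0 < e -> exists mu, simplex mu /\ rgval ti tj M < hv mu + e.
Proof.
move=> e0; rewrite rgvalE.
have [x [mu [hmu ->]] hx] := sup_adherent e0 (conj rset_ne rset_ub).
exists mu; split => //; lra.
Qed.

End Val.

Lemma expR_le2 x : x <= 1/2 -> expR x <= 1 + x + 2 * (x * x).
Proof.
move=> hx.
have h1 : 1 - x <= expR (- x) by have := expR_ge1Dx (- x); lra.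
have p1 : 0 < 1 - x by lra.
have h2 : expR x * (1 - x) <= 1.
  have := ler_wpM2l (ltW (expR_gt0 x)) h1.
  by rewrite -expRD subrr expR0.
have h3 : 1 <= (1 + x + 2 * (x * x)) * (1 - x).
  have -> : (1 + x + 2 * (x * x)) * (1 - x) = 1 + (x * x) * (1 - 2 * x) by ring.
  rewrite lerDl mulr_ge0 // ?mulr_ge0_le0 //; first by rewrite -expr2 sqr_ge0.
  lra.
by rewrite -(ler_pM2r p1) (le_trans h2 h3).
Qed.

Lemma sum_ind (J : finType) (F : J -> R) j :
  \sum_j' F j' * (if j' == j then 1 else 0) = F j.
Proof.
rewrite (bigD1 j) //= eqxx mulr1 big1 ?addr0 // => j' /negbTE ->; by rewrite mulr0.
Qed.

Section Hedge.
Variables (I J : finType) (N : I -> J -> R) (K V : R).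
Hypotheses (hI : (0 < #|I|)%N) (hK : forall i j, `|N i j| <= K)
  (hV : forall p, simplex p -> exists j, \sum_i p i * N i j <= V).

Let K' := `|K| + 1.
Let n : R := #|I|%:R.

Lemma hedge_inv eta (T : nat) : 0 < eta -> eta * K' <= 1/2 ->
  exists c : J -> R, (forall j, 0 <= c j) /\ \sum_j c j = T%:R /\
  \sum_i expR (eta * \sum_j N i j * c j) <=
    n * expR (T%:R * (eta * V + 2 * (eta * eta) * (K' * K'))).
Proof.
move=> eta0 etaK.
have K'1 : 1 <= K' by rewrite /K' lerDr.
have hN : forall i j, `|N i j| <= K' by move=> i j; rewrite (le_trans (hK i j)) // /K' (le_trans (ler_norm K)) // lerDl.
elim: T => [|T [c [c0 [c1 cexp]]]].
  exists (fun _ => 0); split=> //; split; first by rewrite big1.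
  rewrite mul0r expR0 mulr1 (eq_bigr (fun _ => 1)).
    by rewrite sum_const_card.
  by move=> i _; rewrite big1 ?mulr0 ?expR0 // => j _; rewrite mulr0.
set a := eta * V + 2 * (eta * eta) * (K' * K').
set w := fun i => expR (eta * \sum_j N i j * c j).
set W := \sum_i w i.
have w0 : forall i, 0 < w i by move=> i; exact: expR_gt0.
have W0 : 0 < W.
  case: (pickP (fun _ : I => true)) => [i0 _|hn].
    rewrite /W (bigD1 i0) //=; have := w0 i0.
    have : 0 <= \sum_(i | i != i0) w i by apply: sumr_ge0 => i _; exact: ltW.
    lra.
  by move/card_gt0P: hI => [i _]; have := hn i.
have sp : simplex (fun i => w i / W).
  split=> [i|]; first by rewrite divr_ge0 // ltW.
  by rewrite -mulr_suml mulfV // gt_eqF.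
have [j hj] := hV sp.
exists (fun j' => c j' + (if j' == j then 1 else 0)); split.
  by move=> j'; rewrite addr_ge0 //; case: ifP.
split.
  rewrite big_split /= c1 (bigD1 j) //= eqxx big1 ?addr0; first by rewrite -[T.+1]addn1 natrD.
  by move=> j' /negbTE ->.
have e1 : forall i, eta * \sum_j' N i j' * (c j' + (if j' == j then 1 else 0)) =
            eta * \sum_j' N i j' * c j' + eta * N i j.
  move=> i; rewrite -mulrDr; congr (_ * _).
  by rewrite -(sum_ind (N i) j) -big_split /=; apply: eq_bigr => j' _; rewrite mulrDr.
under eq_bigr => i _ do rewrite e1 expRD.
have step : forall i, w i * expR (eta * N i j) <= w i * (1 + eta * N i j + 2 * ((eta * eta) * (K' * K'))).
  move=> i; apply: ler_wpM2l; first exact: ltW.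
  have hx : eta * N i j <= 1/2.
    have := hN i j; rewrite ler_norml => /andP[_ h].
    have := ler_wpM2l (ltW eta0) h; lra.
  apply: (le_trans (expR_le2 hx)).
  have hsq : (eta * N i j) * (eta * N i j) <= (eta * eta) * (K' * K').
    have -> : eta * N i j * (eta * N i j) = (eta * eta) * (N i j * N i j) by ring.
    apply: ler_wpM2l; first by rewrite mulr_ge0 // ltW.
    have -> : N i j * N i j = `|N i j| * `|N i j|.
      by rewrite -normrM ger0_norm // -expr2 sqr_ge0.
    by apply: ler_pM; rewrite ?normr_ge0 ?hN.
  lra.
have : \sum_i w i * expR (eta * N i j) <= \sum_i w i * (1 + eta * N i j + 2 * ((eta * eta) * (K' * K'))).
  by apply: ler_sum => i _; exact: step.
move=> /le_trans; apply.
have -> : \sum_i w i * (1 + eta * N i j + 2 * ((eta * eta) * (K' * K'))) =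
   W * (1 + 2 * ((eta * eta) * (K' * K'))) + eta * (W * \sum_i (w i / W) * N i j).
  have e2 : W * \sum_i (w i / W) * N i j = \sum_i w i * N i j.
    rewrite mulr_sumr; apply: eq_bigr => i _; have Wn : W != 0 by rewrite gt_eqF.
    by field.
  rewrite e2 /W mulr_suml mulr_sumr -big_split /=; apply: eq_bigr => i _; ring.
have h4 : W * (1 + 2 * ((eta * eta) * (K' * K'))) + eta * (W * \sum_i (w i / W) * N i j)
   <= W * (1 + a).
  rewrite /a.
  have := ler_wpM2l (ltW W0) hj; move=> /(ler_wpM2l (ltW eta0)) => h.
  have -> : W * (1 + (eta * V + 2 * (eta * eta) * (K' * K'))) = W * (1 + 2 * ((eta * eta) * (K' * K'))) + eta * (W * V) by ring.
  by rewrite lerD2l.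
apply: le_trans h4 _.
have h5 : W * (1 + a) <= W * expR a by apply: ler_wpM2l; [exact: ltW | exact: expR_ge1Dx].
apply: le_trans h5 _.
have -> : T.+1%:R * a = T%:R * a + a by rewrite -[T.+1]addn1 natrD mulrDl mul1r.
rewrite (expRD (T%:R * a) a) mulrA; apply: ler_wpM2r; [exact: ltW (expR_gt0 _) | exact: cexp].
Qed.


Lemma hedge e : 0 < e ->
  exists q : J -> R, simplex q /\ forall i, \sum_j N i j * q j <= V + e.
Proof.
move=> e0.
have K'1 : 1 <= K' by rewrite /K' lerDr.
have K'0 : 0 < K' by lra.
set eta := Num.min (1 / (2 * K')) (e / (4 * (K' * K'))).
have eta0 : 0 < eta by rewrite lt_min !divr_gt0 ?mulr_gt0.
have etaK : eta * K' <= 1/2.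
  have : eta <= 1 / (2 * K') by rewrite ge_min lexx.
  rewrite ler_pdivlMr ?mulr_gt0 // => h; lra.
have etaK2 : eta * (4 * (K' * K')) <= e.
  have : eta <= e / (4 * (K' * K')) by rewrite ge_min lexx orbT.
  by rewrite ler_pdivlMr ?mulr_gt0.
have n1 : 1 <= n by rewrite /n ler1n.
have lnn0 : 0 <= ln n by apply: ln_ge0.
set x := 2 * ln n / (eta * e).
have x0 : 0 <= x by rewrite /x divr_ge0 ?mulr_ge0 // ltW ?mulr_gt0.
set T := Num.bound x.
have Tx : x < T%:R by apply: archi_boundP.
have T0 : 0 < (T%:R : R) by lra.
have hlnn : 2 * ln n < T%:R * (eta * e) by rewrite -ltr_pdivrMr ?mulr_gt0.
have [c [c0 [c1 cexp]]] := hedge_inv T eta0 etaK.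
exists (fun j => c j / T%:R); split.
  split=> [j|]; first by rewrite divr_ge0 // ltW.
  by rewrite -mulr_suml c1 mulfV // gt_eqF.
move=> i /=.
set a := eta * V + 2 * (eta * eta) * (K' * K').
have hi : expR (eta * \sum_j N i j * c j) <= n * expR (T%:R * a).
  apply: le_trans cexp; rewrite (bigD1 i) //= lerDl.
  by apply: sumr_ge0 => i' _; exact: ltW (expR_gt0 _).
have n0 : 0 < n by lra.
have hi2 : eta * \sum_j N i j * c j <= ln n + T%:R * a.
  have p1 : 0 < expR (eta * \sum_j N i j * c j) := expR_gt0 _.
  have p2 : 0 < expR (T%:R * a) := expR_gt0 _.
  have p3 : 0 < n * expR (T%:R * a) by rewrite mulr_gt0.
  move: hi; rewrite -ler_ln ?posrE // expRK lnM ?posrE // expRK //.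
have -> : \sum_j N i j * (c j / T%:R) = (\sum_j N i j * c j) / T%:R.
  by rewrite mulr_suml; apply: eq_bigr => j _; rewrite mulrA.
rewrite ler_pdivrMr //.
rewrite -(ler_pM2l eta0).
have h3 : T%:R * (eta * (eta * (4 * (K' * K')))) <= T%:R * (eta * e).
  by apply: ler_wpM2l; [exact: ltW | apply: ler_wpM2l; [exact: ltW|]].
move: hi2 h3 hlnn; rewrite /a.
set s := \sum_j N i j * c j.
move=> hi2 h3 hlnn.
have -> : eta * ((V + e) * T%:R) = T%:R * (eta * V) + T%:R * (eta * e) by ring.
have e3 : T%:R * (eta * V + 2 * (eta * eta) * (K' * K')) =
  T%:R * (eta * V) + (T%:R * (eta * (eta * (4 * (K' * K'))))) / 2.
  by field.
rewrite e3 in hi2; lra.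
Qed.

End Hedge.

Section Grid.
Variables (A : finType) (N : nat).
Hypotheses (hA : (0 < #|A|)%N) (hN : (0 < N)%N).

Definition gidx := {ffun A -> 'I_N.+1}.
Definition gpt (k : gidx) : A -> R :=
  if (\sum_a (k a : nat) == N)%N then (fun a => (k a)%:R / N%:R)
  else (fun _ => (#|A|%:R)^-1).

Lemma gpt_simplex k : simplex (gpt k).
Proof.
rewrite /gpt; case: eqP => [hs|_]; last exact: simplex_unif.
split=> [a|]; first by rewrite divr_ge0.
by rewrite -mulr_suml -natr_sum hs mulfV // pnatr_eq0 -lt0n.
Qed.

Lemma grid_round (y : A -> R) : simplex y ->
  exists k, forall a, y a - gpt k a <= #|A|%:R / N%:R /\ gpt k a - y a <= #|A|%:R / N%:R.
Proof.
move=> [y0 y1].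
have [a0 _] : exists a0 : A, true.
  by move/card_gt0P: hA => [a _]; exists a.
have N0 : 0 < (N%:R : R) by rewrite ltr0n.
set t := fun a => Num.truncn (N%:R * y a).
have ht : forall a, (t a)%:R <= N%:R * y a < (t a).+1%:R.
  by move=> a; apply: truncn_itv; rewrite mulr_ge0.
set S := (\sum_(a | a != a0) t a)%N.
have hS : (S%:R : R) = \sum_(a | a != a0) (t a)%:R by rewrite natr_sum.
have SN : (S <= N)%N.
  rewrite -(ler_nat R) hS.
  apply: (@le_trans _ _ (\sum_(a | a != a0) N%:R * y a)).
    by apply: ler_sum => a _; have /andP[] := ht a.
  rewrite -mulr_sumr -[X in _ <= X]mulr1 ler_wpM2l //.
  rewrite -y1 [X in _ <= X](bigD1 a0) //=; have := y0 a0; lra.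
set f := fun a => if a == a0 then (N - S)%N else t a.
have fN : forall a, (f a < N.+1)%N.
  move=> a; rewrite /f; case: ifP => _; first by rewrite ltnS leq_subr.
  rewrite ltnS -(ler_nat R); have /andP[h _] := ht a.
  apply: le_trans h _; rewrite -[X in _ <= X]mulr1 ler_wpM2l //.
  apply: (@simplex_le1 _ _ a); by split.
exists [ffun a => inord (f a)].
have hk : forall a, (([ffun a => inord (f a)] : gidx) a : nat) = f a.
  by move=> a; rewrite ffunE inordK.
have hsum : (\sum_a (([ffun a => inord (f a)] : gidx) a : nat))%N = N.
  rewrite (eq_bigr _ (fun a _ => hk a)) (bigD1 a0) //= /f eqxx.
  rewrite (eq_bigr t); last by move=> a /negbTE ->.
  by rewrite -/S subnK.
have gE : forall a, gpt [ffun a => inord (f a)] a = (f a)%:R / N%:R.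
  by move=> a; rewrite /gpt hsum eqxx /= hk.
have d0 : 0 <= 1 / (N%:R : R) by rewrite divr_ge0.
have hn : 1 / (N%:R : R) <= #|A|%:R / N%:R.
  by rewrite ler_pM2r ?invr_gt0 // ler1n.
have hoth : forall a, a != a0 -> 0 <= y a - (t a)%:R / N%:R < 1 / N%:R.
  move=> a _; have /andP[h1 h2] := ht a.
  rewrite subr_ge0 ler_pdivrMr // mulrC h1 /=.
  rewrite ltrBlDl -mulrDl ltr_pdivlMr // mulrC; lra.
move=> a; rewrite gE.
case: (eqVneq a a0) => [->|na].
  have e : (f a0)%:R / N%:R - y a0 = \sum_(a | a != a0) (y a - (t a)%:R / N%:R).
    rewrite /f eqxx natrB // hS sumrB -mulr_suml.
    have : y a0 = 1 - \sum_(a | a != a0) y a by rewrite -y1 (bigD1 a0) //=; ring.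
    move=> ->; rewrite mulrBl mulfV ?gt_eqF //; ring.
  have lo : 0 <= \sum_(a | a != a0) (y a - (t a)%:R / N%:R).
    by apply: sumr_ge0 => b nb; have /andP[] := hoth b nb.
  have hi : \sum_(a | a != a0) (y a - (t a)%:R / N%:R) <= #|A|%:R / N%:R.
    apply: (@le_trans _ _ (\sum_(a | a != a0) (1 / N%:R))).
      by apply: ler_sum => b nb; have /andP[_ /ltW] := hoth b nb.
    apply: (@le_trans _ _ (\sum_(a : A) (1 / (N%:R : R)))).
      by rewrite [X in _ <= X](bigD1 a0) //= lerDr.
    by rewrite sum_const_card -[_ *+ #|A|]mulr_natl mulrA mulr1.
  split; lra.
have /andP[h1 h2] := hoth a na.
have -> : (f a)%:R = (t a)%:R :> R by rewrite /f (negbTE na).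
split; lra.
Qed.
End Grid.

Section Minimax.
Variables (A B : finType) (M : A -> B -> R) (ti tj : R).
Hypotheses (hA : (0 < #|A|)%N) (hB : (0 < #|B|)%N) (ti0 : 0 <= ti) (tj0 : 0 <= tj).

Lemma Fv_concave (I : finType) (p : I -> R) (X : I -> A -> R) (y : B -> R) :
  simplex p -> (forall i, simplex (X i)) ->
  \sum_i p i * Fv M ti tj (X i) y <= Fv M ti tj (fun a => \sum_i p i * X i a) y.
Proof.
move=> hp hX; rewrite /Fv bil_mix_l.
have e : \sum_i p i * (bil (X i) M y + ti * entropy (X i) - tj * entropy y) =
   \sum_i p i * bil (X i) M y + ti * (\sum_i p i * entropy (X i)) - tj * entropy y.
  rewrite (eq_bigr (fun i => p i * bil (X i) M y + ti * (p i * entropy (X i)) - tj * entropy y * p i)); last by move=> i _; ring.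
  by rewrite sumrB big_split /= -mulr_sumr -mulr_sumr hp.2 mulr1.
rewrite e lerD2r lerD2l; apply: ler_wpM2l => //; exact: entropy_concave.
Qed.

Lemma Fv_convex (J : finType) (q : J -> R) (Y : J -> B -> R) (x : A -> R) :
  simplex q -> (forall j, simplex (Y j)) ->
  Fv M ti tj x (fun b => \sum_j q j * Y j b) <= \sum_j q j * Fv M ti tj x (Y j).
Proof.
move=> hq hY; rewrite /Fv bil_mix_r.
have e : \sum_j q j * (bil x M (Y j) + ti * entropy x - tj * entropy (Y j)) =
   \sum_j q j * bil x M (Y j) + ti * entropy x - tj * (\sum_j q j * entropy (Y j)).
  rewrite (eq_bigr (fun j => q j * bil x M (Y j) + ti * entropy x * q j - tj * (q j * entropy (Y j)))); last by move=> j _; ring.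
  by rewrite sumrB big_split /= -mulr_sumr -mulr_sumr hq.2 mulr1.
rewrite e lerD2l lerN2; apply: ler_wpM2l => //; exact: entropy_concave.
Qed.

Definition errA (m : R) := KM M * (m * m)^-1 + ti * ((2 / m + (m * m)^-1) *+ #|A|).
Definition errB (m : R) := KM M * (m * m)^-1 + tj * ((2 / m + (m * m)^-1) *+ #|B|).

Lemma nm_eq (C : finType) (m : nat) : (0 < #|C|)%N -> (0 < m)%N ->
  #|C|%:R / (#|C| * (m * m))%N%:R = ((m%:R : R) * m%:R)^-1.
Proof.
move=> hC hm; rewrite !natrM.
have : (#|C|%:R : R) != 0 by rewrite pnatr_eq0 -lt0n.
have : (m%:R : R) != 0 by rewrite pnatr_eq0 -lt0n.
by move=> h1 h2; field; rewrite ?h1 ?h2.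
Qed.

Lemma roundB (m : nat) (y : B -> R) : (0 < m)%N -> simplex y ->
  exists k : gidx B (#|B| * (m * m)), forall (x : A -> R), simplex x ->
    Fv M ti tj x (gpt k) <= Fv M ti tj x y + errB m%:R.
Proof.
move=> hm hy.
have hN : (0 < #|B| * (m * m))%N by rewrite !muln_gt0 hB hm.
have [k hk] := grid_round hB hN hy.
exists k => x hx.
have m0 : 0 < (m%:R : R) by rewrite ltr0n.
have h1 : forall b, gpt k b - y b <= (m%:R * m%:R)^-1 by move=> b; rewrite -(@nm_eq B) //; exact: (hk b).2.
have h2 : forall b, y b - gpt k b <= (m%:R * m%:R)^-1 by move=> b; rewrite -(@nm_eq B) //; exact: (hk b).1.
have := bil_diff_r M hx h1 h2.
have := entropy_diff m0 hy (gpt_simplex hB hN k) h2 h1.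
move=> he hb.
have := ler_wpM2l tj0 he.
rewrite /Fv /errB mulrBr; lra.
Qed.

Lemma roundA (m : nat) (x : A -> R) : (0 < m)%N -> simplex x ->
  exists k : gidx A (#|A| * (m * m)), forall (y : B -> R), simplex y ->
    Fv M ti tj x y <= Fv M ti tj (gpt k) y + errA m%:R.
Proof.
move=> hm hx.
have hN : (0 < #|A| * (m * m))%N by rewrite !muln_gt0 hA hm.
have [k hk] := grid_round hA hN hx.
exists k => y hy.
have m0 : 0 < (m%:R : R) by rewrite ltr0n.
have h1 : forall a, gpt k a - x a <= (m%:R * m%:R)^-1 by move=> a; rewrite -(@nm_eq A) //; exact: (hk a).2.
have h2 : forall a, x a - gpt k a <= (m%:R * m%:R)^-1 by move=> a; rewrite -(@nm_eq A) //; exact: (hk a).1.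
have := bil_diff_l M hy h2 h1.
have := entropy_diff m0 hx (gpt_simplex hA hN k) h2 h1.
move=> he hb.
have := ler_wpM2l ti0 he.
rewrite /Fv /errA mulrBr; lra.
Qed.


Lemma err_small e : 0 < e -> exists m : nat, (0 < m)%N /\ errA m%:R <= e /\ errB m%:R <= e.
Proof.
move=> e0.
set C := KM M + 3 * ti * #|A|%:R + 3 * tj * #|B|%:R.
have C0 : 0 <= C.
  rewrite /C !addr_ge0 ?KM_ge0 // mulr_ge0 // mulr_ge0 //.
set m := Num.bound (C / e).
have hm : C / e < m%:R by apply: archi_boundP; rewrite divr_ge0 // ltW.
have m0 : 0 < (m%:R : R) by apply: le_lt_trans hm; rewrite divr_ge0 // ltW.
have m1 : 1 <= (m%:R : R).
  by rewrite ler1n; move: m0; rewrite ltr0n.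
exists m; split; first by rewrite -(ltr0n R).
have hC : C <= e * m%:R by move: hm; rewrite ltr_pdivrMr // mulrC => h; exact: ltW.
have hmm : (m%:R * m%:R)^-1 <= (m%:R : R)^-1.
  rewrite lef_pV2 ?posrE ?mulr_gt0 //.
  by rewrite -[X in X <= _]mul1r ler_wpM2r // ltW.
have i0 : 0 <= (m%:R : R)^-1 by rewrite invr_ge0 ltW.
have h3 : forall (t : R) (n : nat), 0 <= t ->
    t * ((2 / m%:R + (m%:R * m%:R)^-1) *+ n) <= 3 * t * n%:R * (m%:R)^-1.
  move=> t n t0; rewrite -mulr_natr.
  have : 2 / (m%:R : R) + (m%:R * m%:R)^-1 <= 3 * (m%:R)^-1.
    lra.
  move=> h; have := ler_wpM2r (ler0n R n) h; move=> /(ler_wpM2l t0).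
  move=> /le_trans; apply; rewrite le_eqVlt; apply/orP; left; apply/eqP; ring.
have hK : KM M * (m%:R * m%:R)^-1 <= KM M * (m%:R)^-1 by apply: ler_wpM2l => //; exact: KM_ge0.
have hCm : C * (m%:R)^-1 <= e.
  by rewrite -ler_pdivlMr // ?invr_gt0 // invrK.
have := h3 ti #|A| ti0; have := h3 tj #|B| tj0.
have hti : 0 <= 3 * ti * #|A|%:R * (m%:R)^-1 by rewrite !mulr_ge0.
have htj : 0 <= 3 * tj * #|B|%:R * (m%:R)^-1 by rewrite !mulr_ge0.
have eC : C * (m%:R)^-1 = KM M * (m%:R)^-1 + 3 * ti * #|A|%:R * (m%:R)^-1 + 3 * tj * #|B|%:R * (m%:R)^-1.
  by rewrite /C; ring.
rewrite /errA /errB; move=> hb ha; split; lra.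
Qed.


Lemma approx_saddle e : 0 < e -> exists ybar : B -> R, simplex ybar /\
  forall x : A -> R, simplex x -> Fv M ti tj x ybar <= rgval ti tj M + e.
Proof.
move=> e0.
set e4 := e / 4.
have e40 : 0 < e4 by rewrite divr_gt0.
have [m [hm [hA' hB']]] := err_small e40.
set NA := (#|A| * (m * m))%N.
set NB := (#|B| * (m * m))%N.
have hNA : (0 < NA)%N by rewrite !muln_gt0 hA hm.
have hNB : (0 < NB)%N by rewrite !muln_gt0 hB hm.
pose Nm (i : gidx A NA) (j : gidx B NB) := Fv M ti tj (gpt i) (gpt j).
have hI : (0 < #|gidx A NA|)%N by apply/card_gt0P; exists [ffun=> ord0].
have hK : forall i j, `|Nm i j| <= `|Flo M tj| + `|Fhi M ti|.
  move=> i j; have /andP[l u] := Fv_bounds M ti0 tj0 (gpt_simplex hA hNA i) (gpt_simplex hB hNB j).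
  have f1 := ler_norm (- Flo M tj); rewrite normrN in f1.
  have f2 := ler_norm (Fhi M ti).
  have f3 := normr_ge0 (Fhi M ti); have f4 := normr_ge0 (Flo M tj).
  rewrite ler_norml /Nm; apply/andP; split; lra.
have hV : forall p, simplex p -> exists j, \sum_i p i * Nm i j <= rgval ti tj M + e4 + e4.
  move=> p hp.
  set xb := fun a => \sum_i p i * gpt i a.
  have hxb : simplex xb by apply: simplex_mix => // i; exact: gpt_simplex.
  have [y [hy hy2]] := hv_approx M hB ti0 tj0 hxb e40.
  have [j hj] := roundB hm hy.
  exists j.
  have := @Fv_concave _ p (fun i => gpt i) (gpt j) hp (fun i => gpt_simplex hA hNA i).
  have := hj xb hxb.
  have := rg_ge M hB ti0 tj0 hxb.
  rewrite /Nm -/xb; lra.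
have [q [hq hqi]] := hedge hI hK hV e40.
set yb := fun b => \sum_j q j * gpt j b.
have hyb : simplex yb by apply: simplex_mix => // j; exact: gpt_simplex.
exists yb; split => // x hx.
have [i hi] := roundA hm hx.
have := hi yb hyb.
have := @Fv_convex _ q (fun j => gpt j) (gpt i) hq (fun j => gpt_simplex hB hNB j).
have := hqi i.
have -> : \sum_j Nm i j * q j = \sum_j q j * Fv M ti tj (gpt i) (gpt j).
  by apply: eq_bigr => j _; rewrite mulrC.
rewrite -/yb.
have : e = e4 + e4 + e4 + e4 by rewrite /e4; field.
lra.
Qed.

End Minimax.

Section Final.
Variables (A1 A2 : finType) (R1 : A1 -> A2 -> R) (R2 : A2 -> A1 -> R).

Lemma bil_pair (x : A1 -> R) (y : A2 -> R) :
  bil x R1 y + bil y R2 x = \sum_a \sum_b x a * y b * (R1 a b + R2 b a).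
Proof.
rewrite /bil [X in _ + X]exchange_big /= -big_split /=; apply: eq_bigr => a _.
rewrite -big_split /=; apply: eq_bigr => b _; ring.
Qed.

Lemma sum_prod1 (x : A1 -> R) (y : A2 -> R) : simplex x -> simplex y ->
  \sum_a \sum_b x a * y b = 1.
Proof.
move=> hx hy; rewrite -hx.2; apply: eq_bigr => a _.
by rewrite -mulr_sumr hy.2 mulr1.
Qed.

Lemma pair_lo c (x : A1 -> R) (y : A2 -> R) : simplex x -> simplex y ->
  (forall a b, c <= R1 a b + R2 b a) -> c <= bil x R1 y + bil y R2 x.
Proof.
move=> hx hy h; rewrite bil_pair.
rewrite -[c]mul1r -(sum_prod1 hx hy) mulr_suml; apply: ler_sum => a _.
rewrite mulr_suml; apply: ler_sum => b _.
by apply: ler_wpM2l; [rewrite mulr_ge0 // ?(hx.1 a) ?(hy.1 b) | exact: h].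
Qed.

Lemma pair_hi c (x : A1 -> R) (y : A2 -> R) : simplex x -> simplex y ->
  (forall a b, R1 a b + R2 b a <= c) -> bil x R1 y + bil y R2 x <= c.
Proof.
move=> hx hy h; rewrite bil_pair.
rewrite -[c]mul1r -(sum_prod1 hx hy) mulr_suml; apply: ler_sum => a _.
rewrite mulr_suml; apply: ler_sum => b _.
by apply: ler_wpM2l; [rewrite mulr_ge0 // ?(hx.1 a) ?(hy.1 b) | exact: h].
Qed.

Variables (t1 t2 rlo rhi : R).
Hypotheses (hA1 : (0 < #|A1|)%N) (hA2 : (0 < #|A2|)%N) (ht1 : 0 <= t1) (ht2 : 0 <= t2).

Lemma upper : (forall a b, R1 a b + R2 b a <= rhi) ->
  rgval t1 t2 R1 + rgval t2 t1 R2 <= rhi.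
Proof.
move=> h.
have key : forall mu1 mu2, simplex mu1 -> simplex mu2 ->
    hv R1 t1 t2 mu1 + hv R2 t2 t1 mu2 <= rhi.
  move=> mu1 mu2 h1 h2.
  have := hv_le R1 ht1 ht2 h1 h2; have := hv_le R2 ht2 ht1 h2 h1.
  have := pair_hi h1 h2 h; rewrite /Fv; lra.
have : forall mu2, simplex mu2 -> hv R2 t2 t1 mu2 <= rhi - rgval t1 t2 R1.
  move=> mu2 h2; have : rgval t1 t2 R1 <= rhi - hv R2 t2 t1 mu2.
    by apply: rg_le => // mu1 h1; have := key mu1 mu2 h1 h2; lra.
  lra.
move=> /(rg_le hA2) => h'; lra.
Qed.

Lemma lower : (forall a b, rlo <= R1 a b + R2 b a) ->
  rlo <= rgval t1 t2 R1 + rgval t2 t1 R2.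
Proof.
move=> h.
apply/ler_addgt0Pr => e e0.
have [yb [hyb hx]] := approx_saddle R1 hA1 hA2 ht1 ht2 e0.
have : rlo - rgval t1 t2 R1 - e <= hv R2 t2 t1 yb.
  apply: hv_ge => // nu hnu.
  have := hx nu hnu; have := pair_lo hnu hyb h; rewrite /Fv; lra.
have := rg_ge R2 hA1 ht2 ht1 hyb; lra.
Qed.

End Final.

Lemma gvalE (A B : finType) (M : A -> B -> R) : gval M = rgval 0 0 M.
Proof.
rewrite /gval /rgval; congr sup; apply/seteqP; split => x [mu [hmu ->]];
  exists mu; split => //; congr inf; apply/seteqP; split => y [nu [hnu ->]];
  exists nu; split => //; by rewrite !mul0r addr0 subr0.
Qed.

Lemma gap (A B : finType) (M : A -> B -> R) (ti tj : R) :
  (0 < #|A|)%N -> (0 < #|B|)%N -> 0 <= ti -> 0 <= tj ->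
  - (tj * ln (#|B|%:R)) <= rgval ti tj M - gval M <= ti * ln (#|A|%:R).
Proof.
move=> hA hB ti0 tj0; rewrite gvalE.
have z0 : (0 : R) <= 0 by [].
have h1 : forall mu, simplex mu -> hv M ti tj mu <= hv M 0 0 mu + ti * ln (#|A|%:R).
  move=> mu hmu.
  suff : hv M ti tj mu - ti * ln (#|A|%:R) <= hv M 0 0 mu by lra.
  apply: hv_ge => // nu hnu.
  have := hv_le M ti0 tj0 hmu hnu; rewrite /Fv.
  have := ler_wpM2l ti0 (entropy_le hmu).
  have := mulr_ge0 tj0 (entropy_ge0 hnu).
  lra.
have h2 : forall mu, simplex mu -> hv M 0 0 mu <= hv M ti tj mu + tj * ln (#|B|%:R).
  move=> mu hmu.
  suff : hv M 0 0 mu - tj * ln (#|B|%:R) <= hv M ti tj mu by lra.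
  apply: hv_ge => // nu hnu.
  have := hv_le M z0 z0 hmu hnu; rewrite /Fv.
  have := ler_wpM2l tj0 (entropy_le hnu).
  have := mulr_ge0 ti0 (entropy_ge0 hmu).
  lra.
have u : rgval ti tj M <= rgval 0 0 M + ti * ln (#|A|%:R).
  apply: rg_le => // mu hmu; have := h1 mu hmu; have := rg_ge M hB z0 z0 hmu; lra.
have l : rgval 0 0 M <= rgval ti tj M + tj * ln (#|B|%:R).
  apply: rg_le => // mu hmu; have := h2 mu hmu; have := rg_ge M hB ti0 tj0 hmu; lra.
apply/andP; split; lra.
Qed.

End Aux.

Theorem lemma1 (R : realType) (A1 A2 : finType)
  (hA1 : (0 < #|A1|)%N) (hA2 : (0 < #|A2|)%N)
  (tau1 tau2 : R) (ht1 : 0 <= tau1) (ht2 : 0 <= tau2)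
  (R1 : A1 -> A2 -> R) (R2 : A2 -> A1 -> R)
  (rlo rhi : R)
  (hlo : (forall a1 a2, rlo <= R1 a1 a2 + R2 a2 a1) /\
         (exists a1 a2, R1 a1 a2 + R2 a2 a1 = rlo))
  (hhi : (forall a1 a2, R1 a1 a2 + R2 a2 a1 <= rhi) /\
         (exists a1 a2, R1 a1 a2 + R2 a2 a1 = rhi)) :
  (rlo <= gval R1 + gval R2 <= rhi) /\
  (rlo <= rgval tau1 tau2 R1 + rgval tau2 tau1 R2 <= rhi) /\
  (- (tau2 * ln (#|A2|%:R)) <= rgval tau1 tau2 R1 - gval R1 <= tau1 * ln (#|A1|%:R)) /\
  (- (tau1 * ln (#|A1|%:R)) <= rgval tau2 tau1 R2 - gval R2 <= tau2 * ln (#|A2|%:R)).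
Proof.
have z0 : (0 : R) <= 0 by [].
have [hl _] := hlo; have [hh _] := hhi.
split; first by rewrite !gvalE; apply/andP; split; [exact: lower | exact: upper].
split; first by apply/andP; split; [exact: lower | exact: upper].
split; [exact: gap | exact: gap].
Qed.
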